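(* Let $(G,D,\star)$ be a probabilistic metric space with $\star$ continuous. Let $f,g\in\Pi(G)$ and let $(a_n),(b_n)\subset G$ be any Cauchy sequences such that $D(a_n,x)\xrightarrow{w}f(x)$ and $D(b_n,x)\xrightarrow{w}g(x)$ for all $x\in G$. Then the weak limit $\lim_{n,m\to\infty}D(a_n,b_m)$ exists, does not depend on the choice of the sequences $(a_n),(b_n)$, and $$\sup_{x\in G}f(x)\star g(x)=\lim_{n,m}D(a_n,b_m)=\lim_n D(a_n,b_n)=\lim_m f(b_m)=\lim_n g(a_n),$$ all limits being weak limits in $\Delta^+$.
   Context: A distribution function is a nondecreasing, left-continuous function $F:[-\infty,+\infty]\to[0,1]$ with $F(-\infty)=0$, $F(+\infty)=1$; $\Delta^+$ is the set of distribution functions with $F(0)=0$, ordered pointwise (a complete lattice with maximum $\mathcal H_0$, $\mathcal H_0(t)=0$ for $t\le0$, $1$ for $t>0$). A triangle function is a binary operation $\star$ on $\Delta^+$ that is commutative, associative, nondecreasing in each argument, with $F\star\mathcal H_0=F$. $F_n\xrightarrow{w}F$ means $F_n(t)\to F(t)$ at every continuity point $t\in\mathbb R$ of $F$; $\star$ is continuous if $F_n\star L_n\xrightarrow{w}F\star L$ whenever $F_n\xrightarrow{w}F$, $L_n\xrightarrow{w}L$. A probabilistic metric space $(G,D,\star)$ consists of a set $G$, a triangle function $\star$ and $D:G\times G\to\Delta^+$ with (i) $D(p,q)=\mathcal H_0$ iff $p=q$; (ii) $D(p,q)=D(q,p)$; (iii) $D(p,q)\star D(q,r)\le D(p,r)$.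 A sequence $(z_n)\subset G$ is Cauchy if $D(z_n,z_p)\xrightarrow{w}\mathcal H_0$ as $n,p\to\infty$. A map $f:G\to\Delta^+$ is probabilistic $1$-Lipschitz if $D(x,y)\star f(y)\le f(x)$ for all $x,y$. $\Pi(G)$ is the set of probabilistic $1$-Lipschitz maps $f$ for which there is a Cauchy sequence $(a_n)\subset G$ with $D(a_n,x)\xrightarrow{w}f(x)$ for all $x\in G$. *)

(* Defs.v *)
From Stdlib Require Import Reals.
Open Scope R_scope.

(* A distribution function F on [-oo,+oo] with F(-oo)=0, F(+oo)=1 is
   determined by its restriction to R (the values at -oo/+oo are fixed by
   convention).  We represent elements of Delta^+ by functions R -> R. *)
Definition dfun := R -> R.

Definition left_continuous (F : dfun) : Prop :=
  forall t eps, 0 < eps -> exists d, 0 < d /\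
    forall s, t - d < s -> s <= t -> Rabs (F s - F t) < eps.

Definition in_Dplus (F : dfun) : Prop :=
  (forall s t, s <= t -> F s <= F t) /\
  (forall t, 0 <= F t <= 1) /\
  left_continuous F /\
  F 0 = 0.

(* pointwise order (values at -oo, +oo agree for all elements) *)
Definition dle (F L : dfun) : Prop := forall t, F t <= L t.

Definition H0 : dfun := fun t => if Rle_dec t 0 then 0 else 1.

Definition triangle_function (star : dfun -> dfun -> dfun) : Prop :=
  (forall F L, in_Dplus F -> in_Dplus L -> in_Dplus (star F L)) /\
  (forall F L, in_Dplus F -> in_Dplus L -> forall t, star F L t = star L F t) /\
  (forall F L M, in_Dplus F -> in_Dplus L -> in_Dplus M ->
     forall t, star (star F L) M t = star F (star L M) t) /\
  (forall F F' L, in_Dplus F -> in_Dplus F' -> in_Dplus L ->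
     dle F F' -> dle (star F L) (star F' L)) /\
  (forall F, in_Dplus F -> forall t, star F H0 t = F t).

Definition wconv (Fn : nat -> dfun) (F : dfun) : Prop :=
  forall t, continuity_pt F t -> Un_cv (fun n => Fn n t) (F t).

Definition wconv2 (Fnm : nat -> nat -> dfun) (F : dfun) : Prop :=
  forall t, continuity_pt F t ->
    forall eps, 0 < eps -> exists N : nat, forall n m, (N <= n)%nat -> (N <= m)%nat ->
      Rabs (Fnm n m t - F t) < eps.

Definition star_continuous (star : dfun -> dfun -> dfun) : Prop :=
  forall (Fn Ln : nat -> dfun) (F L : dfun),
    (forall n, in_Dplus (Fn n)) -> (forall n, in_Dplus (Ln n)) ->
    in_Dplus F -> in_Dplus L ->
    wconv Fn F -> wconv Ln L -> wconv (fun n => star (Fn n) (Ln n)) (star F L).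

Definition PMspace (G : Type) (D : G -> G -> dfun) (star : dfun -> dfun -> dfun) : Prop :=
  triangle_function star /\
  (forall p q, in_Dplus (D p q)) /\
  (forall p q, D p q = H0 <-> p = q) /\
  (forall p q, D p q = D q p) /\
  (forall p q r, dle (star (D p q) (D q r)) (D p r)).

Definition cauchy_seq {G : Type} (D : G -> G -> dfun) (z : nat -> G) : Prop :=
  wconv2 (fun n p => D (z n) (z p)) H0.

Definition prob_lipschitz {G : Type} (D : G -> G -> dfun) star (f : G -> dfun) : Prop :=
  (forall x, in_Dplus (f x)) /\
  (forall x y, dle (star (D x y) (f y)) (f x)).

Definition in_Pi {G : Type} (D : G -> G -> dfun) star (f : G -> dfun) : Prop :=
  prob_lipschitz D star f /\
  exists a : nat -> G, cauchy_seq D a /\ forall x, wconv (fun n => D (a n) x) (f x).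

Definition is_sup {I : Type} (Fam : I -> dfun) (S : dfun) : Prop :=
  in_Dplus S /\ (forall i, dle (Fam i) S) /\
  (forall U, in_Dplus U -> (forall i, dle (Fam i) U) -> dle S U).

(* Main.v *)
Require Import Defs.
From Stdlib Require Import Reals Lra Lia ZArith ClassicalEpsilon Classical FunctionalExtensionality.
Open Scope R_scope.

Lemma cont_elim F t : continuity_pt F t ->
  forall e, 0 < e -> exists d, 0 < d /\ forall x, Rabs (x - t) < d -> Rabs (F x - F t) < e.
Proof.
  intros H e He. destruct (H e He) as [d [Hd Hx]]. exists d; split; [exact Hd|].
  intros x Hxt. destruct (Req_dec x t) as [->|Hne].
  - rewrite Rminus_diag, Rabs_R0; exact He.
  - apply (Hx x). split; [split; [exact I| auto] | exact Hxt].
Qed.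

Lemma cont_intro F t :
  (forall e, 0 < e -> exists d, 0 < d /\ forall x, Rabs (x - t) < d -> Rabs (F x - F t) < e) ->
  continuity_pt F t.
Proof.
  intros H e He. destruct (H e He) as [d [Hd Hx]]. exists d; split; [exact Hd|].
  intros x [_ Hxt]. apply Hx. exact Hxt.
Qed.

Lemma cont_locconst F t d : 0 < d -> (forall x, Rabs (x - t) < d -> F x = F t) ->
  continuity_pt F t.
Proof.
  intros Hd H. apply cont_intro. intros e He. exists d; split; [exact Hd|].
  intros x Hx. rewrite (H x Hx), Rminus_diag, Rabs_R0. exact He.
Qed.

Lemma step_lemma (F : R -> R) : (forall s t, s <= t -> F s <= F t) ->
  forall p q dl, p < q -> 0 < dl -> exists p' q', p < p' /\ p' < q' /\ q' < q /\ F q' - F p' <= dl.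
Proof.
  intros Hm p q dl Hpq Hdl.
  destruct (archimed ((F q - F p) / dl)) as [Hup _].
  set (z := up ((F q - F p) / dl)) in *.
  assert (Hfq : F p <= F q) by (apply Hm; lra).
  assert (Hz : (0 <= z)%Z).
  { apply le_IZR. assert (0 <= (F q - F p)/dl) by (apply Rmult_le_pos; [lra| left; apply Rinv_0_lt_compat; lra]). lra. }
  set (n := S (Z.to_nat z)).
  assert (Hn : INR n * dl > F q - F p).
  { unfold n. rewrite S_INR, INR_IZR_INZ, Z2Nat.id by exact Hz.
    apply Rmult_gt_compat_r with (r := dl) in Hup; [|lra].
    unfold Rdiv in Hup. rewrite Rmult_assoc, Rinv_l, Rmult_1_r in Hup by lra. nra. }
  set (h := (q - p) / (INR n + 2)).
  assert (Hh : 0 < h).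
  { unfold h. apply Rdiv_lt_0_compat; [lra|]. pose proof (pos_INR n); lra. }
  set (x := fun i : nat => p + (INR i + 1) * h).
  destruct (classic (exists j, (j < n)%nat /\ F (x (S j)) - F (x j) <= dl)) as [[j [Hj Hle]]|Hno].
  - exists (x j), (x (S j)). unfold x. rewrite S_INR.
    assert (INR j + 1 + 1 <= INR n + 1).
    { assert (Hs : (S j <= n)%nat) by lia. apply le_INR in Hs. rewrite S_INR in Hs. lra. }
    assert (Hqh : p + (INR n + 2) * h = q).
    { unfold h. field. pose proof (pos_INR n); lra. }
    pose proof (pos_INR j).
    repeat split; try nra.
    unfold x in Hle; rewrite S_INR in Hle; exact Hle.
  - assert (Hind : forall i, (i <= n)%nat -> F (x i) - F (x 0%nat) >= INR i * dl).
    { induction i as [|i IH]; intros Hi.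
      - simpl. lra.
      - assert (Hc : F (x (S i)) - F (x i) > dl).
        { apply Rnot_le_gt. intro Hc. apply Hno. exists i. split; [lia| exact Hc]. }
        specialize (IH ltac:(lia)). rewrite S_INR. lra. }
    specialize (Hind n (Nat.le_refl n)).
    assert (F p <= F (x 0%nat)) by (apply Hm; unfold x; simpl; lra).
    assert (F (x n) <= F q).
    { apply Hm. unfold x.
      assert (Hqh : p + (INR n + 2) * h = q).
      { unfold h. field. pose proof (pos_INR n); lra. }
      nra. }
    exfalso. lra.
Qed.
Definition stepP (F : R -> R) (pr : R * R) (k : nat) (r : R * R) : Prop :=
  fst pr < snd pr -> fst pr < fst r /\ fst r < snd r /\ snd r < snd pr /\
   F (snd r) - F (fst r) <= / (INR k + 1).

Definition stepF (F : R -> R) (pr : R * R) (k : nat) : R * R :=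
  epsilon (inhabits (0,0)) (stepP F pr k).

Fixpoint nest (F : R -> R) (u v : R) (k : nat) : R * R :=
  match k with O => (u, v) | S k => stepF F (nest F u v k) k end.

Lemma stepF_spec F pr k : (forall s t, s <= t -> F s <= F t) -> stepP F pr k (stepF F pr k).
Proof.
  intros Hm. unfold stepF. apply epsilon_spec.
  destruct (Rlt_dec (fst pr) (snd pr)) as [H|H].
  - assert (Hk : 0 < / (INR k + 1)) by (apply Rinv_0_lt_compat; pose proof (pos_INR k); lra).
    destruct (step_lemma F Hm _ _ _ H Hk) as [p' [q' Hpq]].
    exists (p', q'). intros _. simpl. tauto.
  - exists (0,0). intros H'. contradiction.
Qed.

Lemma exists_cont_pt (F : R -> R) : (forall s t, s <= t -> F s <= F t) ->
  forall u v, u < v -> exists c, u < c /\ c < v /\ continuity_pt F c.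
Proof.
  intros Hm u v Huv.
  set (U := fun k => fst (nest F u v k)). set (V := fun k => snd (nest F u v k)).
  assert (Hs : forall k, U k < V k /\ U k < U (S k) /\ U (S k) < V (S k) /\ V (S k) < V k /\
                         F (V (S k)) - F (U (S k)) <= / (INR k + 1)).
  { induction k as [|k IH].
    - pose proof (stepF_spec F (u,v) 0 Hm) as Hsp. unfold stepP in Hsp. simpl in Hsp.
      unfold U, V; simpl. specialize (Hsp Huv). lra.
    - assert (Hlt : U (S k) < V (S k)) by tauto.
      pose proof (stepF_spec F (nest F u v (S k)) (S k) Hm) as Hsp. unfold stepP in Hsp.
      specialize (Hsp Hlt). unfold U, V in *.
      change (nest F u v (S (S k))) with (stepF F (nest F u v (S k)) (S k)).
      revert Hsp IH. generalize (stepF F (nest F u v (S k)) (S k)). generalize (nest F u v (S k)).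
      intros P Q Hsp IH. simpl in *. lra. }
  assert (HVle : forall k, V k <= v).
  { induction k; [unfold V; simpl; lra|]. specialize (Hs k). lra. }
  assert (Hgr : Un_growing U) by (intro k; specialize (Hs k); lra).
  assert (Hub : has_ub U).
  { exists v. intros r [i ->]. specialize (HVle i). specialize (Hs i). lra. }
  destruct (growing_cv U Hgr Hub) as [c Hc].
  assert (HUc : forall k, U k <= c) by (apply growing_ineq; auto).
  assert (HUV : forall m k, U m < V k).
  { intros m k. destruct (le_lt_dec m k) as [Hmk|Hmk].
    - assert (U m <= U k).
      { induction Hmk as [|kk Hkk IHk]; [lra|]. specialize (Hs kk). lra. }
      specialize (Hs k). lra.
    - assert (V m <= V k).
      { induction Hmk as [|kk Hkk IHk]. specialize (Hs k); lra. specialize (Hs kk); lra. }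
      specialize (Hs m). lra. }
  assert (HcV : forall k, c <= V k).
  { intro k. apply Rnot_lt_le. intro Hlt.
    destruct (Hc (c - V k)) as [N HN]; [lra|].
    specialize (HN N (Nat.le_refl N)). specialize (HUV N k). unfold Rdist in HN.
    specialize (HUc N). rewrite Rabs_left1 in HN; lra. }
  exists c. split; [|split].
  - pose proof (Hs 0%nat). pose proof (HUc 1%nat). assert (U 0%nat = u) by reflexivity. lra.
  - pose proof (Hs 0%nat). pose proof (HcV 1%nat). assert (V 0%nat = v) by reflexivity. lra.
  - apply cont_intro. intros e He.
    destruct (archimed (/ e)) as [Hup _].
    assert (Hz : (0 <= up (/ e))%Z).
    { apply le_IZR. assert (0 < / e) by (apply Rinv_0_lt_compat; lra). lra. }
    set (k := Z.to_nat (up (/ e))).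
    assert (Hk : / (INR k + 1) < e).
    { unfold k. rewrite INR_IZR_INZ, Z2Nat.id by exact Hz.
      assert (0 < / e) by (apply Rinv_0_lt_compat; lra).
      rewrite <- (Rinv_inv e) at 2. apply Rinv_lt_contravar; [nra| lra]. }
    pose proof (Hs k) as Hk1. pose proof (Hs (S k)) as Hk2.
    pose proof (HUc (S (S k))). pose proof (HcV (S (S k))).
    exists (Rmin (c - U (S k)) (V (S k) - c)). split.
    + apply Rmin_pos; lra.
    + intros x Hx. 
      assert (Hx1 : U (S k) < x /\ x < V (S k)).
      { apply Rabs_def2 in Hx. destruct Hx as [Hx1 Hx2].
        pose proof (Rmin_l (c - U (S k)) (V (S k) - c)).
        pose proof (Rmin_r (c - U (S k)) (V (S k) - c)). lra. }
      assert (F (U (S k)) <= F x) by (apply Hm; lra).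
      assert (F x <= F (V (S k))) by (apply Hm; lra).
      assert (F (U (S k)) <= F c) by (apply Hm; lra).
      assert (F c <= F (V (S k))) by (apply Hm; lra).
      apply Rabs_def1; lra.
Qed.
Lemma Dp_mono F s t : in_Dplus F -> s <= t -> F s <= F t.
Proof. intros [H _] Hst. apply H; exact Hst. Qed.
Lemma Dp_bnd F t : in_Dplus F -> 0 <= F t <= 1.
Proof. intros [_ [H _]]. apply H. Qed.
Lemma Dp_neg F t : in_Dplus F -> t <= 0 -> F t = 0.
Proof. intros HF Ht. pose proof (Dp_mono F t 0 HF Ht). pose proof (Dp_bnd F t HF).
  destruct HF as [_ [_ [_ Hz]]]. lra. Qed.
Lemma Dp_lc F : in_Dplus F -> left_continuous F.
Proof. intros [_ [_ [H _]]]. exact H. Qed.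

Lemma common_cont F1 F2 : in_Dplus F1 -> in_Dplus F2 -> forall u v, u < v ->
  exists c, u < c /\ c < v /\ continuity_pt F1 c /\ continuity_pt F2 c.
Proof.
  intros H1 H2 u v Huv.
  destruct (exists_cont_pt (fun x => F1 x + F2 x)) with u v as [c [Hu [Hv Hc]]]; auto.
  { intros s t Hst. pose proof (Dp_mono F1 s t H1 Hst). pose proof (Dp_mono F2 s t H2 Hst). lra. }
  exists c. pose proof (cont_elim _ _ Hc) as Hc'. clear Hc. rename Hc' into Hc.
  split; [auto|split; [auto|split]]; apply cont_intro; intros e He;
  destruct (Hc e He) as [d [Hd Hx]]; exists d; split; auto; intros x Hxc; specialize (Hx x Hxc);
  destruct (Rle_dec x c) as [Hle|Hle].
  all: try (pose proof (Dp_mono F1 x c H1 Hle); pose proof (Dp_mono F2 x c H2 Hle)).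
  all: try (assert (Hle' : c <= x) by lra; pose proof (Dp_mono F1 c x H1 Hle'); pose proof (Dp_mono F2 c x H2 Hle')).
  all: revert Hx; unfold Rabs; repeat destruct Rcase_abs; lra.
Qed.

Lemma one_cont F : in_Dplus F -> forall u v, u < v ->
  exists c, u < c /\ c < v /\ continuity_pt F c.
Proof. intros H u v Huv. destruct (common_cont F F H H u v Huv) as [c Hc]. exists c; tauto. Qed.

Lemma wconv_liminf Fn F : wconv Fn F -> (forall n, in_Dplus (Fn n)) -> in_Dplus F ->
  forall t e, 0 < e -> exists N, forall n, (N <= n)%nat -> F t - e < Fn n t.
Proof.
  intros Hw HFn HF t e He.
  destruct (Dp_lc F HF t (e/2)) as [d [Hd Hl]]; [lra|].
  destruct (one_cont F HF (t - d) t) as [s [Hs1 [Hs2 Hs]]]; [lra|].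
  specialize (Hl s Hs1 (Rlt_le _ _ Hs2)).
  destruct (Hw s Hs (e/2)) as [N HN]; [lra|].
  exists N. intros n Hn. specialize (HN n Hn). unfold Rdist in HN.
  pose proof (Dp_mono (Fn n) s t (HFn n) (Rlt_le _ _ Hs2)).
  apply Rabs_def2 in HN. apply Rabs_def2 in Hl. lra.
Qed.

Lemma cv_lower u l c : Un_cv u l -> (exists N, forall n, (N <= n)%nat -> c <= u n) -> c <= l.
Proof.
  intros Hu [N HN]. apply Rnot_lt_le. intro Hlt.
  destruct (Hu (c - l)) as [M HM]; [lra|].
  specialize (HM (max N M) ltac:(lia)). specialize (HN (max N M) ltac:(lia)).
  unfold Rdist in HM. apply Rabs_def2 in HM. lra.
Qed.

Lemma lim_lower Fn F s t c : wconv Fn F -> (forall n, in_Dplus (Fn n)) -> in_Dplus F ->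
  s < t -> (exists N, forall n, (N <= n)%nat -> c <= Fn n s) -> c <= F t.
Proof.
  intros Hw HFn HF Hst [N HN].
  destruct (one_cont F HF s t Hst) as [r [Hr1 [Hr2 Hr]]].
  assert (c <= F r).
  { apply (cv_lower (fun n => Fn n r)). apply Hw, Hr.
    exists N. intros n Hn. specialize (HN n Hn).
    pose proof (Dp_mono (Fn n) s r (HFn n) (Rlt_le _ _ Hr1)). lra. }
  pose proof (Dp_mono F r t HF (Rlt_le _ _ Hr2)). lra.
Qed.

Lemma wconv_sub Fn F phi : wconv Fn F -> (forall k, (k <= phi k)%nat) ->
  wconv (fun k => Fn (phi k)) F.
Proof.
  intros Hw Hphi t Ht e He. destruct (Hw t Ht e He) as [N HN].
  exists N. intros n Hn. apply HN. specialize (Hphi n). lia.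
Qed.

Lemma dos (P : nat -> nat -> Prop) :
  (forall phi psi : nat -> nat, (forall k, (k <= phi k)%nat) -> (forall k, (k <= psi k)%nat) ->
     exists K, forall k, (K <= k)%nat -> P (phi k) (psi k)) ->
  exists N, forall n m, (N <= n)%nat -> (N <= m)%nat -> P n m.
Proof.
  intros H. apply NNPP. intro Hno.
  assert (Hall : forall N, exists nm : nat * nat, (N <= fst nm)%nat /\ (N <= snd nm)%nat /\ ~ P (fst nm) (snd nm)).
  { intros N. apply NNPP. intro Hc. apply Hno. exists N. intros n m Hn Hm.
    apply NNPP. intro Hp. apply Hc. exists (n, m). simpl. tauto. }
  set (ch := fun N => proj1_sig (constructive_indefinite_description _ (Hall N))).
  assert (Hch : forall N, (N <= fst (ch N))%nat /\ (N <= snd (ch N))%nat /\ ~ P (fst (ch N)) (snd (ch N))).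
  { intros N. unfold ch. destruct (constructive_indefinite_description _ (Hall N)). simpl. exact a. }
  destruct (H (fun k => fst (ch k)) (fun k => snd (ch k))) as [K HK].
  - intro k. apply Hch.
  - intro k. apply Hch.
  - apply (proj2 (proj2 (Hch K))). apply HK. lia.
Qed.
Lemma H0_in : in_Dplus H0.
Proof.
  unfold in_Dplus, H0. split; [|split; [|split]].
  - intros s t Hst. destruct (Rle_dec s 0); destruct (Rle_dec t 0); lra.
  - intro t. destruct (Rle_dec t 0); lra.
  - intros t e He. destruct (Rle_dec t 0) as [Ht|Ht].
    + exists 1. split; [lra|]. intros s Hs1 Hs2. destruct (Rle_dec s 0); [|lra].
      rewrite Rminus_diag, Rabs_R0; lra.
    + exists t. split; [lra|]. intros s Hs1 Hs2. destruct (Rle_dec s 0); [lra|].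
      rewrite Rminus_diag, Rabs_R0; lra.
  - destruct (Rle_dec 0 0); lra.
Qed.

Lemma H0_cont t : t <> 0 -> continuity_pt H0 t.
Proof.
  intro Ht. apply (cont_locconst _ _ (Rabs t)). apply Rabs_pos_lt; exact Ht.
  intros x Hx. unfold H0. apply Rabs_def2 in Hx.
  destruct (Rle_dec x 0); destruct (Rle_dec t 0); auto; exfalso;
  unfold Rabs in Hx; destruct (Rcase_abs t); lra.
Qed.

Definition stepW (t h : R) : dfun := fun x => if Rle_dec x t then 0 else h.

Lemma stepW_in t h : 0 < t -> 0 <= h <= 1 -> in_Dplus (stepW t h).
Proof.
  intros Ht Hh. unfold in_Dplus, stepW. split; [|split; [|split]].
  - intros s u Hsu. destruct (Rle_dec s t); destruct (Rle_dec u t); lra.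
  - intro u. destruct (Rle_dec u t); lra.
  - intros x e He. destruct (Rle_dec x t) as [Hx|Hx].
    + exists 1. split; [lra|]. intros s Hs1 Hs2. destruct (Rle_dec s t); [|lra].
      rewrite Rminus_diag, Rabs_R0; lra.
    + exists (x - t). split; [lra|]. intros s Hs1 Hs2. destruct (Rle_dec s t); [lra|].
      rewrite Rminus_diag, Rabs_R0; lra.
  - destruct (Rle_dec 0 t); lra.
Qed.

Lemma wconv_const F : wconv (fun _ : nat => F) F.
Proof. intros t _ e He. exists 0%nat. intros n _. unfold Rdist. rewrite Rminus_diag, Rabs_R0. exact He. Qed.

Lemma upper_trick (star : dfun -> dfun -> dfun) (Htri : triangle_function star)
  (Hs : star_continuous star) (L : dfun) (HL : in_Dplus L) (V U : nat -> dfun)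
  (HV : forall k, in_Dplus (V k)) (HU : forall k, in_Dplus (U k)) (HUc : wconv U H0)
  (Hle : forall k, dle (star (V k) (U k)) L) (t : R) (Hct : continuity_pt L t)
  (e : R) (He : 0 < e) : exists K, forall k, (K <= k)%nat -> V k t < L t + e.
Proof.
  destruct Htri as [Hst_in [Hcomm [Hassoc [Hmono Hid]]]].
  destruct (Rle_dec t 0) as [Ht0|Ht0].
  { exists 0%nat. intros k _. rewrite (Dp_neg _ _ (HV k) Ht0). pose proof (Dp_bnd L t HL). lra. }
  destruct (Rlt_dec 1 (L t + e)) as [Hbig|Hbig].
  { exists 0%nat. intros k _. pose proof (Dp_bnd (V k) t (HV k)). lra. }
  set (h := L t + e).
  assert (Hh : 0 <= h <= 1) by (pose proof (Dp_bnd L t HL); unfold h; lra).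
  assert (HWin : in_Dplus (stepW t h)) by (apply stepW_in; lra).
  destruct (cont_elim _ _ Hct (e/2)) as [d [Hd Hcd]]; [lra|].
  set (s := t + d/2).
  assert (HLs : L s < L t + e/2).
  { assert (Rabs (s - t) < d) by (unfold s; rewrite Rabs_right; lra).
    specialize (Hcd s H). apply Rabs_def2 in Hcd. lra. }
  assert (HWs : continuity_pt (stepW t h) s).
  { apply (cont_locconst _ _ (d/2)); [lra|]. intros x Hx. apply Rabs_def2 in Hx.
    unfold stepW. unfold s in *. destruct (Rle_dec x t); destruct (Rle_dec (t + d/2) t); lra. }
  assert (Hw := Hs (fun _ => stepW t h) U (stepW t h) H0 (fun _ => HWin) HU HWin H0_in
     (wconv_const _) HUc).
  assert (Heq : star (stepW t h) H0 = stepW t h).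
  { apply functional_extensionality. intro x. apply Hid. exact HWin. }
  rewrite Heq in Hw.
  destruct (Hw s HWs (e/2)) as [K HK]; [lra|].
  exists K. intros k Hk. specialize (HK k Hk). unfold Rdist in HK. cbv beta in HK. apply Rabs_def2 in HK.
  apply Rnot_le_lt. intro Hge.
  assert (HWV : dle (stepW t h) (V k)).
  { intro x. unfold stepW. destruct (Rle_dec x t) as [Hx|Hx].
    - apply Dp_bnd, HV.
    - pose proof (Dp_mono (V k) t x (HV k) ltac:(lra)). lra. }
  pose proof (Hmono _ _ _ HWin (HV k) (HU k) HWV s).
  pose proof (Hle k s).
  assert (stepW t h s = h) by (unfold stepW, s; destruct (Rle_dec (t + d/2) t); lra).
  unfold h in *. lra.
Qed.

Lemma fa_H0 (G : Type) (D : G -> G -> dfun) (f : G -> dfun) (a : nat -> G)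
  (HDp : forall p q, in_Dplus (D p q)) (Hfp : forall x, in_Dplus (f x))
  (Ha : cauchy_seq D a) (Haf : forall x, wconv (fun n => D (a n) x) (f x)) :
  wconv (fun n => f (a n)) H0.
Proof.
  intros t Ht e He.
  destruct (Rle_dec t 0) as [Ht0|Ht0].
  { exists 0%nat. intros n _. unfold Rdist. rewrite (Dp_neg _ _ (Hfp (a n)) Ht0).
    unfold H0. destruct (Rle_dec t 0); [|lra]. rewrite Rminus_diag, Rabs_R0; lra. }
  assert (HH : H0 t = 1) by (unfold H0; destruct (Rle_dec t 0); lra).
  assert (HH2 : H0 (t/2) = 1) by (unfold H0; destruct (Rle_dec (t/2) 0); lra).
  destruct (Ha (t/2) (H0_cont (t/2) ltac:(lra)) (e/2)) as [N HN]; [lra|].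
  exists N. intros n Hn. unfold Rdist. rewrite HH.
  assert (1 - e/2 <= f (a n) t).
  { apply (lim_lower (fun p => D (a p) (a n)) (f (a n)) (t/2) t); auto; [lra|].
    exists N. intros p Hp. specialize (HN p n Hp Hn). rewrite HH2 in HN.
    simpl in HN. apply Rabs_def2 in HN. lra. }
  pose proof (Dp_bnd (f (a n)) t (Hfp (a n))).
  apply Rabs_def1; lra.
Qed.

Definition supv (E : R -> Prop) : R := epsilon (inhabits 0) (is_lub E).

Lemma supv_spec E : bound E -> (exists x, E x) -> is_lub E (supv E).
Proof.
  intros Hb He. unfold supv. apply epsilon_spec.
  destruct (completeness E Hb He) as [m Hm]. exists m; exact Hm.
Qed.
Theorem mainTheorem10 (G : Type) (D : G -> G -> dfun) (star : dfun -> dfun -> dfun)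
  (HG : PMspace G D star) (Hstar : star_continuous star)
  (f g : G -> dfun) (Hf : in_Pi D star f) (Hg : in_Pi D star g)
  (a b : nat -> G) (Ha : cauchy_seq D a) (Hb : cauchy_seq D b)
  (Haf : forall x, wconv (fun n => D (a n) x) (f x))
  (Hbg : forall x, wconv (fun n => D (b n) x) (g x)) :
  exists L : dfun,
    in_Dplus L /\
    wconv2 (fun n m => D (a n) (b m)) L /\
    (forall a' b' : nat -> G, cauchy_seq D a' -> cauchy_seq D b' ->
       (forall x, wconv (fun n => D (a' n) x) (f x)) ->
       (forall x, wconv (fun n => D (b' n) x) (g x)) ->
       wconv2 (fun n m => D (a' n) (b' m)) L) /\
    is_sup (fun x => star (f x) (g x)) L /\
    wconv (fun n => D (a n) (b n)) L /\
    wconv (fun m => f (b m)) L /\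
    wconv (fun n => g (a n)) L.
Proof.
  destruct HG as [Htri [HDp [Hsep [Hsym Hdtri]]]].
  pose proof Htri as [Hst_in [Hcomm [Hassoc [Hmono Hid]]]].
  destruct Hf as [[Hfp Hflip] _]. destruct Hg as [[Hgp Hglip] _].
  assert (Hfg : forall x, in_Dplus (star (f x) (g x))) by (intro; apply Hst_in; auto).
  set (E := fun t r => exists x, r = star (f x) (g x) t).
  assert (HE : forall t, is_lub (E t) (supv (E t))).
  { intro t. apply supv_spec.
    - exists 1. intros r [x ->]. apply Dp_bnd, Hfg.
    - exists (star (f (a 0%nat)) (g (a 0%nat)) t). exists (a 0%nat). reflexivity. }
  set (L := fun t => supv (E t)).
  assert (HLub : forall x t, star (f x) (g x) t <= L t).
  { intros x t. apply (HE t). exists x. reflexivity. }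
  assert (HLleast : forall t c, (forall x, star (f x) (g x) t <= c) -> L t <= c).
  { intros t c Hc. apply (HE t). intros r [x ->]. apply Hc. }
  assert (HLnear : forall t e, 0 < e -> exists x, L t - e < star (f x) (g x) t).
  { intros t e He. apply NNPP. intro Hno.
    assert (L t <= L t - e); [|lra].
    apply HLleast. intro x. apply Rnot_lt_le. intro Hlt. apply Hno. exists x. exact Hlt. }
  assert (HLin : in_Dplus L).
  { split; [|split; [|split]].
    - intros s t Hst. apply HLleast. intro x.
      pose proof (Dp_mono _ s t (Hfg x) Hst). pose proof (HLub x t). lra.
    - intro t. split.
      + pose proof (HLub (a 0%nat) t). pose proof (Dp_bnd _ t (Hfg (a 0%nat))). lra.
      + apply HLleast. intro x. apply Dp_bnd, Hfg.
    - intros t e He. destruct (HLnear t (e/2)) as [x Hx]; [lra|].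
      destruct (Dp_lc _ (Hfg x) t (e/2)) as [d [Hd Hl]]; [lra|].
      exists d. split; [exact Hd|]. intros s Hs1 Hs2. specialize (Hl s Hs1 Hs2).
      apply Rabs_def2 in Hl. pose proof (HLub x s).
      assert (L s <= L t).
      { apply HLleast. intro y. pose proof (Dp_mono _ s t (Hfg y) Hs2). pose proof (HLub y t). lra. }
      apply Rabs_def1; lra.
    - apply Rle_antisym.
      + apply HLleast. intro x. rewrite (Dp_neg _ 0 (Hfg x)); lra.
      + pose proof (HLub (a 0%nat) 0). pose proof (Dp_bnd _ 0 (Hfg (a 0%nat))). lra. }
  assert (HLA : forall a' b' : nat -> G,
       (forall x, wconv (fun n => D (a' n) x) (f x)) ->
       (forall x, wconv (fun n => D (b' n) x) (g x)) ->
       forall t e, 0 < e -> exists N, forall n m, (N <= n)%nat -> (N <= m)%nat ->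
         L t - e < D (a' n) (b' m) t).
  { intros a' b' Ha'f Hb'g t e He.
    destruct (HLnear t (e/2)) as [x Hx]; [lra|].
    apply dos. intros phi psi Hphi Hpsi.
    assert (H1 : wconv (fun k => D (a' (phi k)) x) (f x)) by (apply (wconv_sub (fun n => D (a' n) x)); auto).
    assert (H2 : wconv (fun k => D x (b' (psi k))) (g x)).
    { replace (fun k => D x (b' (psi k))) with (fun k => D (b' (psi k)) x).
      - apply (wconv_sub (fun n => D (b' n) x)); auto.
      - apply functional_extensionality. intro k. apply Hsym. }
    pose proof (Hstar _ _ _ _ (fun k => HDp _ _) (fun k => HDp _ _) (Hfp x) (Hgp x) H1 H2) as H3.
    destruct (wconv_liminf _ _ H3 (fun k => Hst_in _ _ (HDp _ _) (HDp _ _)) (Hfg x) t (e/2))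
      as [K HK]; [lra|].
    exists K. intros k Hk. specialize (HK k Hk). simpl in HK.
    pose proof (Hdtri (a' (phi k)) x (b' (psi k)) t). lra. }
  assert (HLB : forall a' b' : nat -> G, cauchy_seq D a' -> cauchy_seq D b' ->
       (forall x, wconv (fun n => D (a' n) x) (f x)) ->
       (forall x, wconv (fun n => D (b' n) x) (g x)) ->
       forall t, continuity_pt L t -> forall e, 0 < e ->
       exists N, forall n m, (N <= n)%nat -> (N <= m)%nat ->
         D (a' n) (b' m) t < L t + e).
  { intros a' b' Ha' Hb' Ha'f Hb'g t Ht e He.
    apply dos. intros phi psi Hphi Hpsi.
    apply (upper_trick star Htri Hstar L HLin (fun k => D (a' (phi k)) (b' (psi k)))
             (fun k => star (f (a' (phi k))) (g (b' (psi k))))); auto.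
    - assert (HH : star H0 H0 = H0).
      { apply functional_extensionality. intro x. apply Hid, H0_in. }
      rewrite <- HH. apply Hstar; auto using H0_in.
      + apply (wconv_sub (fun n => f (a' n))); auto. apply (fa_H0 G D f a'); auto.
      + apply (wconv_sub (fun n => g (b' n))); auto. apply (fa_H0 G D g b'); auto.
    - intros k s. simpl.
      rewrite <- Hassoc by auto.
      rewrite (Hsym (a' (phi k)) (b' (psi k))).
      pose proof (Hmono _ _ (g (b' (psi k))) (Hst_in _ _ (HDp _ _) (Hfp _)) (Hfp _) (Hgp _)
                    (Hflip (b' (psi k)) (a' (phi k))) s).
      pose proof (HLub (b' (psi k)) s). lra. }
  assert (HW2 : forall a' b' : nat -> G, cauchy_seq D a' -> cauchy_seq D b' ->
       (forall x, wconv (fun n => D (a' n) x) (f x)) ->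
       (forall x, wconv (fun n => D (b' n) x) (g x)) ->
       wconv2 (fun n m => D (a' n) (b' m)) L).
  { intros a' b' Ha' Hb' Ha'f Hb'g t Ht e He.
    destruct (HLA a' b' Ha'f Hb'g t e He) as [N1 HN1].
    destruct (HLB a' b' Ha' Hb' Ha'f Hb'g t Ht e He) as [N2 HN2].
    exists (max N1 N2). intros n m Hn Hm.
    specialize (HN1 n m ltac:(lia) ltac:(lia)). specialize (HN2 n m ltac:(lia) ltac:(lia)).
    apply Rabs_def1; lra. }
  exists L. split; [exact HLin|]. split; [apply HW2; auto|]. split; [exact HW2|].
  split.
  { split; [exact HLin|]. split.
    - intros x t. apply HLub.
    - intros U HU Hup t. apply HLleast. intro x. apply Hup. }
  split.
  { intros t Ht e He. destruct (HW2 a b Ha Hb Haf Hbg t Ht e He) as [N HN].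
    exists N. intros n Hn. apply HN; auto. }
  split.
  - intros t Ht e He.
    destruct (upper_trick star Htri Hstar L HLin (fun k => f (b k)) (fun k => g (b k))
      (fun k => Hfp _) (fun k => Hgp _) (fa_H0 G D g b HDp Hgp Hb Hbg)
      (fun k s => HLub (b k) s) t Ht e He) as [K1 HK1].
    destruct (cont_elim _ _ Ht (e/2)) as [d [Hd Hcd]]; [lra|].
    set (s := t - d/2).
    assert (HLs : L t - e/2 < L s).
    { assert (Rabs (s - t) < d) by (unfold s; rewrite Rabs_left; lra).
      specialize (Hcd s H). apply Rabs_def2 in Hcd. lra. }
    destruct (HLA a b Haf Hbg s (e/4)) as [N HN]; [lra|].
    exists (max K1 N). intros m Hm. specialize (HK1 m ltac:(lia)). simpl in HK1.
    assert (L s - e/4 <= f (b m) t).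
    { apply (lim_lower (fun n => D (a n) (b m)) (f (b m)) s t); auto; [unfold s; lra|].
      exists N. intros n Hn. left. apply HN; lia. }
    unfold Rdist. apply Rabs_def1; lra.
  - intros t Ht e He.
    destruct (upper_trick star Htri Hstar L HLin (fun k => g (a k)) (fun k => f (a k))
      (fun k => Hgp _) (fun k => Hfp _) (fa_H0 G D f a HDp Hfp Ha Haf)) with t e
      as [K1 HK1]; auto.
    { intros k s. simpl. rewrite Hcomm by auto. apply HLub. }
    destruct (cont_elim _ _ Ht (e/2)) as [d [Hd Hcd]]; [lra|].
    set (s := t - d/2).
    assert (HLs : L t - e/2 < L s).
    { assert (Rabs (s - t) < d) by (unfold s; rewrite Rabs_left; lra).
      specialize (Hcd s H). apply Rabs_def2 in Hcd. lra. }
    destruct (HLA a b Haf Hbg s (e/4)) as [N HN]; [lra|].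
    exists (max K1 N). intros n Hn. specialize (HK1 n ltac:(lia)). simpl in HK1.
    assert (L s - e/4 <= g (a n) t).
    { apply (lim_lower (fun m => D (b m) (a n)) (g (a n)) s t); auto; [unfold s; lra|].
      exists N. intros m Hm. left. rewrite Hsym. apply HN; lia. }
    unfold Rdist. apply Rabs_def1; lra.
Qed.
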